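(* Let $U,V\subset(0,\infty)$ be non-empty open sets and let $f\colon(0,\infty)\to\mathbb{R}$ be continuous such that $(f(ku+v))_{k\ge1}\in\mathcal{G}$ for all $u\in U$, $v\in V$. Then there exist an integer $n\ge1$, rationals $q_1,\dots,q_n$ not all zero, and non-empty open intervals $U'\subset U$, $V'\subset V$ such that $$\sum_{k=1}^n q_k\, f(ku+v)=0\quad\text{for all } u\in U',\ v\in V'.$$
   Context: A sequence of real numbers $(a_k)_{k\ge1}$ is called pointwise good (written $(a_k)\in\mathcal{G}$) if for every measure preserving flow $(U_t)_{t\in\mathbb{R}}$ on a probability space $(X,\mathcal{B},\mu)$ (a measurable action of $\mathbb{R}$ by measure preserving transformations) and every $F\in L^\infty(X,\mu)$, the averages $\frac1n\sum_{k=1}^n F(U_{a_k}x)$ converge for $\mu$-almost every $x$ as $n\to\infty$. It may be used that every sequence in $\mathcal{G}$ is linearly dependent over $\mathbb{Q}$, i.e. some nontrivial finite $\mathbb{Q}$-linear combination of its terms vanishes. *)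

(* Defs.v *)
From Stdlib Require Import Reals QArith Qreals.
Open Scope R_scope.

Fixpoint sum1 (n : nat) (g : nat -> R) : R :=
  match n with O => 0 | S m => sum1 m g + g (S m) end.

Definition sigma_algebra {X : Type} (B : (X -> Prop) -> Prop) : Prop :=
  B (fun _ => True) /\
  (forall A, B A -> B (fun x => ~ A x)) /\
  (forall A : nat -> X -> Prop, (forall n, B (A n)) -> B (fun x => exists n, A n x)).

Definition generated {X : Type} (S : (X -> Prop) -> Prop) (A : X -> Prop) : Prop :=
  forall B : (X -> Prop) -> Prop, sigma_algebra B -> (forall E, S E -> B E) -> B A.

Definition borel : (R -> Prop) -> Prop := generated open_set.

Definition prod_sigma {X : Type} (B : (X -> Prop) -> Prop) : (R * X -> Prop) -> Prop :=
  generated (fun P => exists A E, borel A /\ B E /\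
                       forall p, P p <-> (A (fst p) /\ E (snd p))).

Definition prob_measure {X : Type} (B : (X -> Prop) -> Prop) (mu : (X -> Prop) -> R) : Prop :=
  (forall A, B A -> 0 <= mu A) /\
  mu (fun _ => True) = 1 /\
  (forall A : nat -> X -> Prop,
     (forall n, B (A n)) ->
     (forall n m x, n <> m -> A n x -> A m x -> False) ->
     infinite_sum (fun n => mu (A n)) (mu (fun x => exists n, A n x))).

Definition mp_flow {X : Type} (B : (X -> Prop) -> Prop) (mu : (X -> Prop) -> R)
  (U : R -> X -> X) : Prop :=
  (forall x, U 0 x = x) /\
  (forall s t x, U (s + t) x = U s (U t x)) /\
  (forall E, B E -> prod_sigma B (fun p => E (U (fst p) (snd p)))) /\
  (forall t E, B E -> B (fun x => E (U t x)) /\ mu (fun x => E (U t x)) = mu E).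

Definition Linfty {X : Type} (B : (X -> Prop) -> Prop) (mu : (X -> Prop) -> R)
  (F : X -> R) : Prop :=
  (forall A, borel A -> B (fun x => A (F x))) /\
  exists M N, B N /\ mu N = 1 /\ forall x, N x -> Rabs (F x) <= M.

(* pointwise good sequences (a_k)_{k>=1}; a 0 is irrelevant *)
Definition good (a : nat -> R) : Prop :=
  forall (X : Type) (B : (X -> Prop) -> Prop) (mu : (X -> Prop) -> R) (U : R -> X -> X)
         (F : X -> R),
    sigma_algebra B -> prob_measure B mu -> mp_flow B mu U -> Linfty B mu F ->
    exists N, B N /\ mu N = 1 /\
      forall x, N x -> exists l,
        Un_cv (fun n => sum1 (S n) (fun k => F (U (a k) x)) / INR (S n)) l.

Definition Q_lin_dep (a : nat -> R) : Prop :=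
  exists (n : nat) (q : nat -> Q),
    (exists k, (1 <= k <= n)%nat /\ ~ (q k == 0)%Q) /\
    sum1 n (fun k => Q2R (q k) * a k) = 0.

(* Main.v *)
Require Import Defs.
From Stdlib Require Import Cantor ZArith.
From Stdlib Require Import Reals QArith Qreals Lra Lia Classical ClassicalEpsilon.
Open Scope R_scope.
Definition gsum (f : R -> R) n (q : nat -> Q) u v := sum1 n (fun k => Q2R (q k) * f (INR k * u + v)).

Lemma sum1_ext n g h : (forall k, (1 <= k <= n)%nat -> g k = h k) -> sum1 n g = sum1 n h.
Proof. induction n; intros H; simpl; auto. rewrite IHn, H; auto; intros; try apply H; lia. Qed.

Lemma cont_eps f x0 : continuity_pt f x0 -> forall e, 0 < e -> exists d, 0 < d /\
  forall x, Rabs (x - x0) < d -> Rabs (f x - f x0) < e.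
Proof.
  intros H e He. destruct (H e He) as [d [Hd H2]]. exists d; split; auto.
  intros x Hx. destruct (Req_dec x x0). subst. rewrite Rminus_diag, Rabs_R0; auto.
  apply (H2 x). split. split. exact I. auto. exact Hx.
Qed.

Lemma gsum_cont f q u0 v0 (Hf : forall x, 0 < x -> continuity_pt f x) (Hu : 0 < u0) (Hv : 0 < v0) :
  forall n eps, 0 < eps -> exists d, 0 < d /\ forall u v, Rabs (u - u0) < d -> Rabs (v - v0) < d ->
    Rabs (gsum f n q u v - gsum f n q u0 v0) < eps.
Proof.
  induction n; intros eps He.
  - exists 1. split. lra. intros. unfold gsum; simpl. rewrite Rminus_diag, Rabs_R0; auto.
  - destruct (IHn (eps/2)) as [d1 [Hd1 H1]]. lra.
    set (N := INR (S n)). assert (HN : 0 < N) by (apply lt_0_INR; lia).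
    set (c := Q2R (q (S n))).
    assert (Hc := Rabs_pos c).
    destruct (cont_eps f (N * u0 + v0) (Hf _ (Rplus_lt_0_compat _ _ (Rmult_lt_0_compat _ _ HN Hu) Hv)) (eps/2/(Rabs c + 1))) as [dl [Hdl H2]].
    { apply Rdiv_lt_0_compat; lra. }
    exists (Rmin d1 (dl / (N + 1))). split.
    { apply Rmin_glb_lt; auto. apply Rdiv_lt_0_compat; lra. }
    intros u v Hu1 Hv1.
    assert (Hm1 := Rmin_l d1 (dl/(N+1))). assert (Hm2 := Rmin_r d1 (dl/(N+1))).
    assert (A1 : Rabs (gsum f n q u v - gsum f n q u0 v0) < eps/2) by (apply H1; lra).
    assert (Hx : Rabs ((N * u + v) - (N * u0 + v0)) < dl).
    { replace ((N * u + v) - (N * u0 + v0)) with (N * (u - u0) + (v - v0)) by ring.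
      eapply Rle_lt_trans. apply Rabs_triang. rewrite Rabs_mult, (Rabs_pos_eq N) by lra.
      assert (dl / (N+1) * (N+1) = dl) by (field; lra). nra. }
    specialize (H2 _ Hx).
    assert (E : eps / 2 / (Rabs c + 1) * (Rabs c + 1) = eps/2) by (field; lra).
    assert (A2 : Rabs (c * (f (N*u+v) - f (N*u0+v0))) < eps/2).
    { rewrite Rabs_mult. assert (H0 := Rabs_pos (f (N * u + v) - f (N * u0 + v0))).
      set (e := eps / 2 / (Rabs c + 1)) in *. set (D := Rabs (f (N * u + v) - f (N * u0 + v0))) in *.
      assert (0 < e) by (unfold e; apply Rdiv_lt_0_compat; lra).
      assert (Rabs c * D <= Rabs c * e) by (apply Rmult_le_compat_l; lra).
      assert (Rabs c * e + e = eps/2) by (rewrite <- E; ring). lra. }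
    change (gsum f (S n) q u v) with (gsum f n q u v + c * f (N*u+v)).
    change (gsum f (S n) q u0 v0) with (gsum f n q u0 v0 + c * f (N*u0+v0)).
    replace (gsum f n q u v + c * f (N * u + v) - (gsum f n q u0 v0 + c * f (N * u0 + v0)))
      with ((gsum f n q u v - gsum f n q u0 v0) + c * (f (N*u+v) - f (N*u0+v0))) by ring.
    eapply Rle_lt_trans. apply Rabs_triang. lra.
Qed.

Definition decZ (c : nat) : Z := (Z.of_nat (fst (Cantor.of_nat c)) - Z.of_nat (snd (Cantor.of_nat c)))%Z.
Lemma decZ_surj z : exists c, decZ c = z.
Proof.
  destruct (Z_le_gt_dec 0 z).
  - exists (Cantor.to_nat (Z.to_nat z, 0%nat)). unfold decZ. rewrite Cantor.cancel_of_to. simpl. lia.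
  - exists (Cantor.to_nat (0%nat, Z.to_nat (- z))). unfold decZ. rewrite Cantor.cancel_of_to. simpl. lia.
Qed.
Definition decQ (c : nat) : Q := Qmake (decZ (fst (Cantor.of_nat c))) (Pos.of_succ_nat (snd (Cantor.of_nat c))).
Lemma decQ_surj q : exists c, decQ c = q.
Proof.
  destruct q as [z p]. destruct (decZ_surj z) as [a Ha].
  exists (Cantor.to_nat (a, pred (Pos.to_nat p))). unfold decQ. rewrite Cantor.cancel_of_to. simpl.
  rewrite Ha. f_equal. apply SuccNat2Pos.inv. pose proof (Pos2Nat.is_pos p). lia.
Qed.
Fixpoint decF (n c : nat) : nat -> Q :=
  match n with
  | O => fun _ => 0%Q
  | S l => fun k => if Nat.eqb k (S l) then decQ (fst (Cantor.of_nat c)) else decF l (snd (Cantor.of_nat c)) k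
  end.
Lemma decF_surj : forall n (q : nat -> Q), exists c, forall k, (1 <= k <= n)%nat -> decF n c k = q k.
Proof.
  induction n; intros q.
  - exists 0%nat. intros; lia.
  - destruct (IHn q) as [c0 Hc0]. destruct (decQ_surj (q (S n))) as [a Ha].
    exists (Cantor.to_nat (a, c0)). intros k Hk. cbn [decF]. rewrite Cantor.cancel_of_to. cbn [fst snd].
    destruct (Nat.eqb_spec k (S n)). subst; auto. apply Hc0. lia.
Qed.
Definition decN (m : nat) : nat := fst (Cantor.of_nat m).
Definition decq (m : nat) : nat -> Q := decF (fst (Cantor.of_nat m)) (snd (Cantor.of_nat m)).
Lemma dec_surj n (q : nat -> Q) : exists m, decN m = n /\ forall k, (1 <= k <= n)%nat -> decq m k = q k.
Proof.
  destruct (decF_surj n q) as [c Hc]. exists (Cantor.to_nat (n, c)).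
  unfold decN, decq. rewrite Cantor.cancel_of_to. simpl. auto.
Qed.
Section Main.
Variables (U V : R -> Prop) (f : R -> R).
Hypothesis HUpos : forall u, U u -> 0 < u.
Hypothesis HVpos : forall v, V v -> 0 < v.
Hypothesis Hf : forall x, 0 < x -> continuity_pt f x.
Hypothesis Hno : forall n q a1 b1 a2 b2, (exists k, (1 <= k <= n)%nat /\ ~ (q k == 0)%Q) ->
  a1 < b1 -> a2 < b2 -> (forall u, a1 < u < b1 -> U u) -> (forall v, a2 < v < b2 -> V v) ->
  exists u v, a1 < u < b1 /\ a2 < v < b2 /\ gsum f n q u v <> 0.

Record Box := mkBox {ba1 : R; bb1 : R; ba2 : R; bb2 : R}.
Definition inB b u v := ba1 b <= u <= bb1 b /\ ba2 b <= v <= bb2 b.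
Definition Valid b := ba1 b < bb1 b /\ ba2 b < bb2 b /\ forall u v, inB b u v -> U u /\ V v.
Definition Sub b' b := ba1 b <= ba1 b' /\ bb1 b' <= bb1 b /\ ba2 b <= ba2 b' /\ bb2 b' <= bb2 b.
Definition bad m u v := (exists k, (1 <= k <= decN m)%nat /\ ~ (decq m k == 0)%Q) /\
  gsum f (decN m) (decq m) u v = 0.

Lemma step m b : Valid b -> exists b', Valid b' /\ Sub b' b /\ forall u v, inB b' u v -> ~ bad m u v.
Proof.
  intros [H1 [H2 H3]].
  destruct (classic (exists k, (1 <= k <= decN m)%nat /\ ~ (decq m k == 0)%Q)) as [Hk|Hk].
  2:{ exists b. split. split; auto. split. unfold Sub; lra. intros u v _ [Hb _]. tauto. }
  destruct (Hno _ _ (ba1 b) (bb1 b) (ba2 b) (bb2 b) Hk H1 H2) as [u [v [Hu [Hv Hg]]]].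
  { intros u Hu. apply (H3 u (ba2 b)). unfold inB; lra. }
  { intros v Hv. apply (H3 (ba1 b) v). unfold inB; lra. }
  assert (Uu : U u) by (apply (H3 u (ba2 b)); unfold inB; lra).
  assert (Vv : V v) by (apply (H3 (ba1 b) v); unfold inB; lra).
  destruct (gsum_cont f (decq m) u v Hf (HUpos _ Uu) (HVpos _ Vv) (decN m) (Rabs (gsum f (decN m) (decq m) u v)))
    as [d [Hd Hc]].
  { apply Rabs_pos_lt; auto. }
  set (r := Rmin d (Rmin (u - ba1 b) (Rmin (bb1 b - u) (Rmin (v - ba2 b) (bb2 b - v)))) / 2).
  assert (Hr : 0 < r).
  { unfold r. apply Rdiv_lt_0_compat; [|lra].
    repeat apply Rmin_glb_lt; lra. }
  assert (Hr1 : r <= d / 2 /\ r <= (u - ba1 b)/2 /\ r <= (bb1 b - u)/2 /\ r <= (v - ba2 b)/2 /\ r <= (bb2 b - v)/2).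
  { unfold r.
    pose proof (Rmin_l d (Rmin (u - ba1 b) (Rmin (bb1 b - u) (Rmin (v - ba2 b) (bb2 b - v))))).
    pose proof (Rmin_r d (Rmin (u - ba1 b) (Rmin (bb1 b - u) (Rmin (v - ba2 b) (bb2 b - v))))).
    pose proof (Rmin_l (u - ba1 b) (Rmin (bb1 b - u) (Rmin (v - ba2 b) (bb2 b - v)))).
    pose proof (Rmin_r (u - ba1 b) (Rmin (bb1 b - u) (Rmin (v - ba2 b) (bb2 b - v)))).
    pose proof (Rmin_l (bb1 b - u) (Rmin (v - ba2 b) (bb2 b - v))).
    pose proof (Rmin_r (bb1 b - u) (Rmin (v - ba2 b) (bb2 b - v))).
    pose proof (Rmin_l (v - ba2 b) (bb2 b - v)).
    pose proof (Rmin_r (v - ba2 b) (bb2 b - v)). lra. }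
  exists (mkBox (u - r) (u + r) (v - r) (v + r)).
  split; [split; [simpl; lra|split; [simpl; lra|]]|split].
  - intros x y [Hx Hy]. simpl in *. apply H3. unfold inB; lra.
  - unfold Sub; simpl; lra.
  - intros x y [Hx Hy] [_ Hb]. simpl in *.
    assert (Rabs (x - u) < d) by (apply Rabs_def1; lra).
    assert (Rabs (y - v) < d) by (apply Rabs_def1; lra).
    specialize (Hc x y H H0). rewrite Hb in Hc.
    rewrite Rminus_0_l, Rabs_Ropp in Hc. lra.
Qed.
Lemma sub_refl b : Sub b b.
Proof. unfold Sub; lra. Qed.
Lemma sub_trans a b c : Sub a b -> Sub b c -> Sub a c.
Proof. unfold Sub; lra. Qed.

Lemma no_cover b0 : Valid b0 -> exists x y, inB b0 x y /\ forall m, ~ bad m x y.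
Proof.
  intros Hv0.
  assert (Hs : forall m (sb : {b | Valid b}), {sb' : {b | Valid b} |
     Sub (proj1_sig sb') (proj1_sig sb) /\ forall u v, inB (proj1_sig sb') u v -> ~ bad m u v}).
  { intros m sb. apply constructive_indefinite_description.
    destruct (step m (proj1_sig sb) (proj2_sig sb)) as [b' [Hv [Hsub Hnb]]].
    exists (exist _ b' Hv). simpl; auto. }
  pose (bs := fix bs (m : nat) : {b | Valid b} :=
     match m with O => exist _ b0 Hv0 | S m' => proj1_sig (Hs m' (bs m')) end).
  assert (HS : forall m, Sub (proj1_sig (bs (S m))) (proj1_sig (bs m))).
  { intro m. exact (proj1 (proj2_sig (Hs m (bs m)))). }
  assert (HN : forall m u v, inB (proj1_sig (bs (S m))) u v -> ~ bad m u v).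
  { intro m. exact (proj2 (proj2_sig (Hs m (bs m)))). }
  assert (HM : forall m k, (m <= k)%nat -> Sub (proj1_sig (bs k)) (proj1_sig (bs m))).
  { intros m k Hmk. induction Hmk. apply sub_refl. eapply sub_trans. apply HS. auto. }
  assert (HV : forall m, Valid (proj1_sig (bs m))) by (intro m; exact (proj2_sig (bs m))).
  assert (Hab1 : forall m k, ba1 (proj1_sig (bs m)) <= bb1 (proj1_sig (bs k))).
  { intros m k. pose proof (HM m (m + k)%nat ltac:(lia)). pose proof (HM k (m + k)%nat ltac:(lia)).
    pose proof (HV (m+k)%nat). unfold Sub, Valid in *. lra. }
  assert (Hab2 : forall m k, ba2 (proj1_sig (bs m)) <= bb2 (proj1_sig (bs k))).
  { intros m k. pose proof (HM m (m + k)%nat ltac:(lia)). pose proof (HM k (m + k)%nat ltac:(lia)).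
    pose proof (HV (m+k)%nat). unfold Sub, Valid in *. lra. }
  destruct (completeness (fun x => exists m, x = ba1 (proj1_sig (bs m)))) as [x [Hx1 Hx2]].
  { exists (bb1 (proj1_sig (bs 0%nat))). intros z [m ->]. apply Hab1. }
  { exists (ba1 (proj1_sig (bs 0%nat))). exists 0%nat; auto. }
  destruct (completeness (fun x => exists m, x = ba2 (proj1_sig (bs m)))) as [y [Hy1 Hy2]].
  { exists (bb2 (proj1_sig (bs 0%nat))). intros z [m ->]. apply Hab2. }
  { exists (ba2 (proj1_sig (bs 0%nat))). exists 0%nat; auto. }
  assert (Hin : forall m, inB (proj1_sig (bs m)) x y).
  { intro m. unfold inB. split; split.
    - apply Hx1. exists m; auto.
    - apply Hx2. intros z [k ->]. apply Hab1.
    - apply Hy1. exists m; auto.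
    - apply Hy2. intros z [k ->]. apply Hab2. }
  exists x, y. split. exact (Hin 0%nat). intro m. apply HN. apply Hin.
Qed.
End Main.

Theorem mainTheorem6
  (Gdep : forall a : nat -> R, good a -> Q_lin_dep a)
  (U V : R -> Prop) (f : R -> R)
  (HUo : open_set U) (HVo : open_set V)
  (HUne : exists u, U u) (HVne : exists v, V v)
  (HUpos : forall u, U u -> 0 < u) (HVpos : forall v, V v -> 0 < v)
  (Hf : forall x, 0 < x -> continuity_pt f x)
  (HG : forall u v, U u -> V v -> good (fun k => f (INR k * u + v))) :
  exists (n : nat) (q : nat -> Q) (a1 b1 a2 b2 : R),
    (1 <= n)%nat /\
    (exists k, (1 <= k <= n)%nat /\ ~ (q k == 0)%Q) /\
    a1 < b1 /\ a2 < b2 /\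
    (forall u, a1 < u < b1 -> U u) /\ (forall v, a2 < v < b2 -> V v) /\
    (forall u v, a1 < u < b1 -> a2 < v < b2 ->
       sum1 n (fun k => Q2R (q k) * f (INR k * u + v)) = 0).
Proof.
  apply NNPP; intro Hneg.
  assert (Hno : forall n q a1 b1 a2 b2, (exists k, (1 <= k <= n)%nat /\ ~ (q k == 0)%Q) ->
    a1 < b1 -> a2 < b2 -> (forall u, a1 < u < b1 -> U u) -> (forall v, a2 < v < b2 -> V v) ->
    exists u v, a1 < u < b1 /\ a2 < v < b2 /\ gsum f n q u v <> 0).
  { intros n q a1 b1 a2 b2 Hk h1 h2 hU hV. apply NNPP; intro Hc. apply Hneg.
    exists n, q, a1, b1, a2, b2. split.
    { destruct Hk as [k [[? ?] _]]; lia. }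
    do 5 (split; auto). intros u v Hu Hv. apply NNPP; intro Hne. apply Hc. exists u, v; auto. }
  destruct HUne as [u0 Hu0]. destruct HVne as [v0 Hv0].
  destruct (HUo u0 Hu0) as [d1 Hd1]. destruct (HVo v0 Hv0) as [d2 Hd2].
  pose proof (cond_pos d1). pose proof (cond_pos d2).
  assert (Hval : Valid U V (mkBox (u0 - d1/2) (u0 + d1/2) (v0 - d2/2) (v0 + d2/2))).
  { split; [simpl; lra|split; [simpl; lra|]]. intros u v [Hu Hv]; simpl in *. split.
    - apply Hd1. unfold disc. apply Rabs_def1; lra.
    - apply Hd2. unfold disc. apply Rabs_def1; lra. }
  destruct (no_cover U V f HUpos HVpos Hf Hno _ Hval) as [x [y [Hin Hnb]]].
  destruct (proj2 (proj2 Hval) x y Hin) as [Ux Vy].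
  destruct (Gdep _ (HG x y Ux Vy)) as [n [q [Hk Hsum]]].
  destruct (dec_surj n q) as [m [Hm1 Hm2]].
  apply (Hnb m). unfold bad. rewrite Hm1. split.
  - destruct Hk as [k [Hk1 Hk2]]. exists k. rewrite Hm2; auto.
  - unfold gsum. rewrite <- Hsum. apply sum1_ext. intros k Hk'. rewrite Hm2; auto.
Qed.
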